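(* Let $(X,d)$ be a nonempty complete and rectifiably path-connected metric space and let $F:X\rightarrow K(X)$ be a set-valued uniform pointwise contraction with modulus $\beta\in[0,1)$. Then $\mathrm{Fix}(F)\neq\varnothing$.
   Context: $\Pi$ is the set of finite partitions $0=t_0<\cdots<t_n=1$ of $[0,1]$; the length of a continuous path $p:[0,1]\to X$ is $l(p)=\sup_{\pi\in\Pi}\sum_{i=1}^n d(p(t_{i-1}),p(t_i))$. $X$ is rectifiably path-connected if every two points $x,y$ are joined by a continuous path $p$ with $p(0)=x$, $p(1)=y$, $l(p)<\infty$. $K(X)$ is the set of nonempty compact subsets of $X$; $H$ is the Hausdorff distance. $F$ is a set-valued uniform pointwise contraction with modulus $\beta$ if every $x\in X$ has an open neighborhood $N(x)$ with $H(F(x),F(y))\le\beta\, d(x,y)$ for all $y\in N(x)$. $\mathrm{Fix}(F)=\{x:x\in F(x)\}$. *)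

(* Defs.v *)
From Stdlib Require Import Reals List.
From Coquelicot Require Import Coquelicot.
Open Scope R_scope.

Section MetricDefs.
Context {X : Type} (d : X -> X -> R).

Definition is_metric : Prop :=
  (forall x y, d x y = 0 <-> x = y) /\
  (forall x y, d x y = d y x) /\
  (forall x y z, d x z <= d x y + d y z).

Definition cauchy_seq (u : nat -> X) : Prop :=
  forall eps, 0 < eps -> exists N, forall m n, (N <= m)%nat -> (N <= n)%nat -> d (u m) (u n) < eps.

Definition converges_to (u : nat -> X) (l : X) : Prop :=
  forall eps, 0 < eps -> exists N, forall n, (N <= n)%nat -> d (u n) l < eps.

Definition complete_metric : Prop :=
  forall u, cauchy_seq u -> exists l, converges_to u l.

Definition open_set (U : X -> Prop) : Prop :=
  forall x, U x -> exists eps, 0 < eps /\ forall y, d x y < eps -> U y.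

Definition compact_set (K : X -> Prop) : Prop :=
  forall (I : Type) (U : I -> X -> Prop),
    (forall i, open_set (U i)) ->
    (forall x, K x -> exists i, U i x) ->
    exists l : list I, forall x, K x -> exists i, In i l /\ U i x.

Definition nonempty_compact (K : X -> Prop) : Prop :=
  (exists x, K x) /\ compact_set K.

Definition pt_set_dist (x : X) (B : X -> Prop) : R :=
  real (Glb_Rbar (fun r => exists b, B b /\ r = d x b)).

Definition hausdorff (A B : X -> Prop) : Rbar :=
  Lub_Rbar (fun r => (exists a, A a /\ r = pt_set_dist a B) \/
                     (exists b, B b /\ r = pt_set_dist b A)).

Definition set_valued_upc (F : X -> X -> Prop) (beta : R) : Prop :=
  forall x, exists N : X -> Prop, open_set N /\ N x /\
    forall y, N y -> Rbar_le (hausdorff (F x) (F y)) (Finite (beta * d x y)).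

(* continuous path p : [0,1] -> X (values outside [0,1] are irrelevant) *)
Definition continuous_path (p : R -> X) : Prop :=
  forall t, 0 <= t <= 1 -> forall eps, 0 < eps -> exists delta, 0 < delta /\
    forall s, 0 <= s <= 1 -> Rabs (s - t) < delta -> d (p s) (p t) < eps.

Definition is_partition (n : nat) (t : nat -> R) : Prop :=
  (1 <= n)%nat /\ t 0%nat = 0 /\ t n = 1 /\ forall i, (i < n)%nat -> t i < t (S i).

Definition partition_sum (p : R -> X) (n : nat) (t : nat -> R) : R :=
  sum_f_R0 (fun i => d (p (t i)) (p (t (S i)))) (n - 1).

Definition path_length (p : R -> X) : Rbar :=
  Lub_Rbar (fun r => exists n t, is_partition n t /\ r = partition_sum p n t).

Definition rectifiably_path_connected : Prop :=
  forall x y, exists p : R -> X, continuous_path p /\ p 0 = x /\ p 1 = y /\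
    Rbar_lt (path_length p) p_infty.

End MetricDefs.

(* Main.v *)
Require Import Defs.
From Stdlib Require Import Reals Lra Lia List Classical IndefiniteDescription ClassicalEpsilon ZArith Cantor.
From Coquelicot Require Import Coquelicot.
Open Scope R_scope.

Lemma small_lt (e : R) : 0 < e -> exists N : nat, forall k, (N <= k)%nat -> / (INR k + 1) < e.
Proof.
  intros He. destruct (archimed_cor1 e He) as [N [HN HN0]].
  exists N. intros k Hk.
  apply le_INR in Hk.
  assert (0 < INR N) by (apply lt_0_INR; lia).
  apply Rle_lt_trans with (/ INR N); [|exact HN].
  apply Rinv_le_contravar; lra.
Qed.

Section Basics.
Context {X : Type} (d : X -> X -> R) (Hm : is_metric d).

Lemma d_refl x : d x x = 0.
Proof. destruct Hm as [H _]. apply H. reflexivity. Qed.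
Lemma d_sym x y : d x y = d y x.
Proof. destruct Hm as [_ [H _]]. apply H. Qed.
Lemma d_tri x y z : d x z <= d x y + d y z.
Proof. destruct Hm as [_ [_ H]]. apply H. Qed.
Lemma d_pos x y : 0 <= d x y.
Proof. pose proof (d_tri x y x). rewrite d_refl, (d_sym y x) in H. lra. Qed.
Lemma d_eq0 x y : d x y = 0 -> x = y.
Proof. destruct Hm as [H _]. apply H. Qed.

Lemma conv_unique u a b : converges_to d u a -> converges_to d u b -> a = b.
Proof.
  intros Ha Hb. apply d_eq0.
  apply Rle_antisym; [|apply d_pos].
  apply le_epsilon. intros e He.
  destruct (Ha (e/2)) as [N1 H1]; [lra|].
  destruct (Hb (e/2)) as [N2 H2]; [lra|].
  specialize (H1 (max N1 N2) ltac:(lia)). specialize (H2 (max N1 N2) ltac:(lia)).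
  pose proof (d_tri a (u (max N1 N2)) b). rewrite d_sym in H1. lra.
Qed.

Lemma conv_sub u l (phi : nat -> nat) :
  converges_to d u l -> (forall n, (n <= phi n)%nat) -> converges_to d (fun n => u (phi n)) l.
Proof.
  intros H Hp e He. destruct (H e He) as [N HN]. exists N. intros n Hn.
  apply HN. specialize (Hp n). lia.
Qed.

Lemma conv_le u v a b c :
  converges_to d u a -> converges_to d v b ->
  (forall e, 0 < e -> exists N, forall n, (N <= n)%nat -> d (u n) (v n) <= c + e) ->
  d a b <= c.
Proof.
  intros Ha Hb Hc. apply le_epsilon. intros e He.
  destruct (Ha (e/3)) as [N1 H1]; [lra|].
  destruct (Hb (e/3)) as [N2 H2]; [lra|].
  destruct (Hc (e/3)) as [N3 H3]; [lra|].
  set (n := max N1 (max N2 N3)).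
  specialize (H1 n ltac:(lia)). specialize (H2 n ltac:(lia)). specialize (H3 n ltac:(lia)).
  pose proof (d_tri a (u n) b). pose proof (d_tri (u n) (v n) b).
  rewrite d_sym in H1. lra.
Qed.

Lemma strict_ge (phi : nat -> nat) : (forall n, (phi n < phi (S n))%nat) -> forall n, (n <= phi n)%nat.
Proof. intros H n. induction n; [lia|]. specialize (H n). lia. Qed.

Lemma strict_mono (phi : nat -> nat) : (forall n, (phi n < phi (S n))%nat) ->
  forall n m, (n <= m)%nat -> (phi n <= phi m)%nat.
Proof. intros H n m Hnm. induction Hnm; [lia|]. specialize (H m). lia. Qed.

Lemma cluster (K : X -> Prop) (u : nat -> X) :
  compact_set d K -> (forall n, K (u n)) ->
  exists l, K l /\ forall e, 0 < e -> forall N, exists n, (N <= n)%nat /\ d (u n) l < e.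
Proof.
  intros HK Hu. apply NNPP. intros Hno.
  set (I := {l : X & {e : R & {N : nat | 0 < e /\ forall n, (N <= n)%nat -> e <= d (u n) l}}}).
  set (U := fun (i : I) (y : X) => d (projT1 i) y < projT1 (projT2 i)).
  destruct (HK I U) as [lst Hlst].
  - intros i y Hy. exists (projT1 (projT2 i) - d (projT1 i) y). split; [unfold U in Hy; lra|].
    intros z Hz. unfold U in *. pose proof (d_tri (projT1 i) y z). lra.
  - intros x Kx.
    assert (exists e N, 0 < e /\ forall n, (N <= n)%nat -> e <= d (u n) x) as [e [N [He HN]]].
    { apply NNPP. intros H. apply Hno. exists x. split; [exact Kx|].
      intros e He N. apply NNPP. intros H2. apply H. exists e, N. split; [exact He|].
      intros n Hn. apply Rnot_lt_le. intros H3. apply H2. exists n. split; assumption. }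
    exists (existT _ x (existT _ e (exist _ N (conj He HN)))).
    unfold U. simpl. rewrite d_refl. exact He.
  - set (M := fold_right (fun (i : I) acc => max (proj1_sig (projT2 (projT2 i))) acc) 0%nat lst).
    assert (HM : forall i, In i lst -> (proj1_sig (projT2 (projT2 i)) <= M)%nat).
    { unfold M. clear. induction lst as [|j r IH]; simpl; [tauto|].
      intros i [<-|Hi]; [lia|]. specialize (IH i Hi). lia. }
    destruct (Hlst (u M) (Hu M)) as [i [Hi HU]].
    specialize (HM i Hi). unfold U in HU. clear Hi Hlst.
    destruct i as [l [e [N [He HN]]]]. simpl in *.
    specialize (HN M HM). rewrite d_sym in HU. lra.
Qed.

Lemma seq_compact (K : X -> Prop) (u : nat -> X) :
  compact_set d K -> (forall n, K (u n)) ->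
  exists phi : nat -> nat, (forall n, (phi n < phi (S n))%nat) /\
    exists l, K l /\ converges_to d (fun n => u (phi n)) l.
Proof.
  intros HK Hu. destruct (cluster K u HK Hu) as [l [Kl Hl]].
  assert (H' : forall N k : nat, exists n, (N <= n)%nat /\ d (u n) l < / (INR k + 1)).
  { intros N k. apply Hl. pose proof (pos_INR k). apply Rinv_0_lt_compat. lra. }
  set (pick := fun N k => proj1_sig (constructive_indefinite_description _ (H' N k))).
  assert (Hpick : forall N k, (N <= pick N k)%nat /\ d (u (pick N k)) l < / (INR k + 1)).
  { intros N k. unfold pick. destruct (constructive_indefinite_description _ _). exact a. }
  set (phi := fix phi k := match k with 0%nat => pick 0%nat 0%nat | S k' => pick (S (phi k')) (S k') end).
  exists phi. split.
  - intros n. simpl. destruct (Hpick (S (phi n)) (S n)). lia.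
  - exists l. split; [exact Kl|]. intros e He.
    destruct (small_lt e He) as [N HN]. exists N. intros n Hn.
    assert (d (u (phi n)) l < / (INR n + 1)).
    { destruct n; simpl; [apply Hpick|apply Hpick]. }
    specialize (HN n Hn). lra.
Qed.

Lemma compact_closed (K : X -> Prop) (w : nat -> X) x :
  compact_set d K -> (forall n, K (w n)) -> converges_to d w x -> K x.
Proof.
  intros HK Hw Hx. destruct (seq_compact K w HK Hw) as [phi [Hphi [l [Kl Hl]]]].
  assert (x = l) as ->; [|exact Kl].
  apply (conv_unique (fun n => w (phi n))); [|exact Hl].
  apply conv_sub; [exact Hx|]. apply strict_ge. exact Hphi.
Qed.

Lemma attain (K : X -> Prop) z c :
  compact_set d K -> (forall e, 0 < e -> exists w, K w /\ d z w <= c + e) ->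
  exists w, K w /\ d z w <= c.
Proof.
  intros HK H.
  assert (H' : forall k : nat, exists w, K w /\ d z w <= c + / (INR k + 1)).
  { intros k. apply H. pose proof (pos_INR k). apply Rinv_0_lt_compat. lra. }
  set (w := fun k => proj1_sig (constructive_indefinite_description _ (H' k))).
  assert (Hw : forall k, K (w k) /\ d z (w k) <= c + / (INR k + 1)).
  { intros k. unfold w. destruct (constructive_indefinite_description _ _). exact a. }
  destruct (seq_compact K w HK (fun k => proj1 (Hw k))) as [phi [Hphi [l [Kl Hl]]]].
  exists l. split; [exact Kl|].
  pose proof (strict_ge phi Hphi) as Hge.
  apply le_epsilon. intros e He.
  destruct (Hl (e/2)) as [N1 H1]; [lra|].
  destruct (small_lt (e/2)) as [N2 H2]; [lra|].
  set (n := max N1 N2).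
  specialize (H1 n ltac:(lia)). specialize (H2 (phi n) ltac:(specialize (Hge n); lia)).
  destruct (Hw (phi n)) as [_ Hd].
  pose proof (d_tri z (w (phi n)) l). lra.
Qed.

End Basics.

Section Haus.
Context {X : Type} (d : X -> X -> R) (Hm : is_metric d).

Lemma pt_dist_approx (a : X) (B : X -> Prop) c e :
  (exists b, B b) -> pt_set_dist d a B <= c -> 0 < e -> exists b, B b /\ d a b < c + e.
Proof.
  intros [b0 Hb0] Hc He. unfold pt_set_dist in Hc.
  set (S := fun r => exists b, B b /\ r = d a b) in *.
  destruct (Glb_Rbar_correct S) as [Hlb Hglb].
  assert (H1 : Rbar_le (Glb_Rbar S) (d a b0)) by (apply Hlb; exists b0; auto).
  assert (H0 : Rbar_le 0 (Glb_Rbar S)).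
  { apply Hglb. intros x [b [_ ->]]. simpl. apply (d_pos d Hm). }
  destruct (Glb_Rbar S) as [g| |] eqn:Hg; simpl in H1, H0; try contradiction.
  simpl in Hc.
  apply NNPP. intros Hno.
  assert (Rbar_le (c + e) g).
  { apply Hglb. intros x [b [Hb ->]]. simpl. apply Rnot_lt_le.
    intros Hlt. apply Hno. exists b. auto. }
  simpl in H. lra.
Qed.

Lemma haus_left (A B : X -> Prop) a c e :
  (exists b, B b) -> Rbar_le (hausdorff d A B) (Finite c) -> A a -> 0 < e ->
  exists b, B b /\ d a b < c + e.
Proof.
  intros HB H Ha He. apply pt_dist_approx; auto.
  assert (Rbar_le (pt_set_dist d a B) (hausdorff d A B)).
  { unfold hausdorff. destruct (Lub_Rbar_correct
      (fun r => (exists a, A a /\ r = pt_set_dist d a B) \/ (exists b, B b /\ r = pt_set_dist d b A))) as [Hub _].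
    apply Hub. left. exists a. auto. }
  exact (Rbar_le_trans _ _ _ H0 H).
Qed.

Lemma haus_right (A B : X -> Prop) b c e :
  (exists a, A a) -> Rbar_le (hausdorff d A B) (Finite c) -> B b -> 0 < e ->
  exists a, A a /\ d b a < c + e.
Proof.
  intros HA H Hb He. apply pt_dist_approx; auto.
  assert (Rbar_le (pt_set_dist d b A) (hausdorff d A B)).
  { unfold hausdorff. destruct (Lub_Rbar_correct
      (fun r => (exists a, A a /\ r = pt_set_dist d a B) \/ (exists b, B b /\ r = pt_set_dist d b A))) as [Hub _].
    apply Hub. right. exists b. auto. }
  exact (Rbar_le_trans _ _ _ H0 H).
Qed.

End Haus.

Definition ctrl {X : Type} (d : X -> X -> R) (p : R -> X) (lam : R -> R) : Prop :=
  (forall u v, 0 <= u -> u <= v -> v <= 1 -> d (p u) (p v) <= lam v - lam u) /\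
  (forall t, 0 <= t <= 1 -> forall e, 0 < e -> exists del, 0 < del /\
     forall s, 0 <= s <= 1 -> Rabs (s - t) < del -> Rabs (lam s - lam t) < e).

Section L1.
Context {X : Type} (d : X -> X -> R) (Hm : is_metric d) (F : X -> X -> Prop) (beta : R)
  (HF : forall x, nonempty_compact d (F x)) (Hb : 0 <= beta < 1) (Hupc : set_valued_upc d F beta).

Lemma ctrl_mono p lam u v : ctrl d p lam -> 0 <= u -> u <= v -> v <= 1 -> lam u <= lam v.
Proof. intros [H _] ? ? ?. pose proof (H u v). pose proof (d_pos d Hm (p u) (p v)). lra. Qed.

Lemma ctrl_dist p lam u v : ctrl d p lam -> 0 <= u <= 1 -> 0 <= v <= 1 ->
  d (p u) (p v) <= Rabs (lam v - lam u).
Proof.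
  intros [H _] Hu Hv. destruct (Rle_dec u v).
  - pose proof (H u v). pose proof (d_pos d Hm (p u) (p v)).
    rewrite Rabs_right; lra.
  - pose proof (H v u). pose proof (d_pos d Hm (p v) (p u)). rewrite d_sym by auto.
    rewrite Rabs_left1; lra.
Qed.

Lemma local_step p lam c : ctrl d p lam -> 0 <= c <= 1 ->
  exists del, 0 < del /\ forall v, 0 <= v <= 1 -> Rabs (v - c) < del ->
    Rbar_le (hausdorff d (F (p c)) (F (p v))) (Finite (beta * d (p c) (p v))).
Proof.
  intros Hc Hcc. destruct (Hupc (p c)) as [N [HN [Nc HH]]].
  destruct (HN (p c) Nc) as [e0 [He0 Hball]].
  destruct Hc as [Hc1 Hc2]. destruct (Hc2 c Hcc e0 He0) as [del [Hdel Hd]].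
  exists del. split; [exact Hdel|]. intros v Hv Hvc. apply HH. apply Hball.
  pose proof (ctrl_dist p lam c v (conj Hc1 Hc2) Hcc Hv). specialize (Hd v Hv Hvc). lra.
Qed.

Lemma L1eps p lam s t z : ctrl d p lam -> 0 <= s -> s <= t -> t <= 1 -> F (p s) z ->
  forall e, 0 < e -> exists w, F (p t) w /\ d z w <= beta * (lam t - lam s) + e.
Proof.
  intros Hc Hs Hst Ht Hz.
  set (Q := fun u => forall e, 0 < e -> exists w, F (p u) w /\ d z w <= beta * (lam u - lam s) + e).
  change (Q t).
  assert (Qs : Q s).
  { intros e He. exists z. split; [exact Hz|]. rewrite (d_refl d Hm). lra. }
  assert (TR1 : forall c v, s <= c -> c <= v -> v <= 1 -> Q c ->
     Rbar_le (hausdorff d (F (p c)) (F (p v))) (Finite (beta * d (p c) (p v))) -> Q v).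
  { intros c v Hsc Hcv Hv Qc HH e He.
    destruct (Qc (e/2) ltac:(lra)) as [w' [Hw' Hdw']].
    destruct (haus_left d Hm (F (p c)) (F (p v)) w' _ (e/2) (proj1 (HF (p v))) HH Hw' ltac:(lra))
      as [w [Hw Hdw]].
    exists w. split; [exact Hw|].
    pose proof (proj1 Hc c v ltac:(lra) Hcv Hv).
    pose proof (d_tri d Hm z w' w).
    assert (beta * d (p c) (p v) <= beta * (lam v - lam c)) by (apply Rmult_le_compat_l; lra).
    lra. }
  assert (TR2 : forall c v, s <= v -> v <= c -> c <= 1 -> Q v ->
     Rbar_le (hausdorff d (F (p c)) (F (p v))) (Finite (beta * d (p c) (p v))) -> Q c).
  { intros c v Hsv Hvc Hc1 Qv HH e He.
    destruct (Qv (e/2) ltac:(lra)) as [w' [Hw' Hdw']].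
    destruct (haus_right d Hm (F (p c)) (F (p v)) w' _ (e/2) (proj1 (HF (p c))) HH Hw' ltac:(lra))
      as [w [Hw Hdw]].
    exists w. split; [exact Hw|].
    pose proof (proj1 Hc v c ltac:(lra) Hvc Hc1).
    rewrite (d_sym d Hm (p c) (p v)) in Hdw.
    pose proof (d_tri d Hm z w' w).
    assert (beta * d (p v) (p c) <= beta * (lam c - lam v)) by (apply Rmult_le_compat_l; lra).
    lra. }
  set (E := fun u => s <= u <= 1 /\ forall v, s <= v <= u -> Q v).
  assert (Hbd : bound E) by (exists 1; intros x [Hx _]; lra).
  assert (Hne : exists x, E x).
  { exists s. split; [lra|]. intros v Hv. replace v with s by lra. exact Qs. }
  destruct (completeness E Hbd Hne) as [T [HTub HTlub]].
  assert (HsT : s <= T) by (apply HTub; destruct Hne; unfold E; split; [lra|]; intros v Hv; replace v with s by lra; exact Qs).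
  assert (HT1 : T <= 1) by (apply HTlub; intros x [Hx _]; lra).
  assert (Step1 : forall v, s <= v < T -> Q v).
  { intros v Hv. apply NNPP. intros HQ.
    assert (T <= v).
    { apply HTlub. intros x [Hx Hxq]. apply Rnot_lt_le. intros Hlt. apply HQ. apply Hxq. lra. }
    lra. }
  destruct (local_step p lam T Hc ltac:(lra)) as [del [Hdel HL]].
  assert (QT : Q T).
  { destruct (Rle_lt_or_eq_dec s T HsT) as [Hlt|Heq]; [|rewrite <- Heq; exact Qs].
    set (v := Rmax s (T - del/2)).
    assert (s <= v) by apply Rmax_l.
    assert (v < T) by (unfold v; apply Rmax_lub_lt; lra).
    assert (T - del/2 <= v) by apply Rmax_r.
    apply (TR2 T v); try lra.
    - apply Step1. lra.
    - apply HL; [lra|]. rewrite Rabs_left1; lra. }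
  assert (ET : forall v, s <= v <= T -> Q v).
  { intros v Hv. destruct (Rle_lt_or_eq_dec v T (proj2 Hv)) as [Hlt| ->]; [apply Step1; lra|exact QT]. }
  assert (T = 1).
  { apply NNPP. intros HT. 
    set (v' := Rmin 1 (T + del/2)).
    assert (T < v') by (unfold v'; apply Rmin_glb_lt; lra).
    assert (v' <= 1) by apply Rmin_l.
    assert (v' <= T + del/2) by apply Rmin_r.
    assert (E v').
    { split; [lra|]. intros v Hv. destruct (Rle_dec v T); [apply ET; lra|].
      apply (TR1 T v); try lra; [exact QT|]. apply HL; [lra|]. rewrite Rabs_right; lra. }
    pose proof (HTub v' H2). lra. }
  apply ET. lra.
Qed.

Lemma L1 p lam s t z : ctrl d p lam -> 0 <= s -> s <= t -> t <= 1 -> F (p s) z ->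
  exists w, F (p t) w /\ d z w <= beta * (lam t - lam s).
Proof.
  intros. apply (attain d Hm). apply HF. apply (L1eps p lam); auto.
Qed.

End L1.

Definition gr (n i : nat) : R := INR i / 2 ^ n.

Lemma pw2_pos n : 0 < 2 ^ n.
Proof. apply pow_lt. lra. Qed.

Lemma INR_pow2 n : INR (2 ^ n) = 2 ^ n.
Proof. rewrite pow_INR. reflexivity. Qed.

Lemma gr_pos n i : 0 <= gr n i.
Proof. unfold gr. pose proof (pos_INR i). pose proof (pw2_pos n). apply Rdiv_le_0_compat; lra. Qed.

Lemma gr_le n i j : (i <= j)%nat -> gr n i <= gr n j.
Proof. intros H. unfold gr. apply le_INR in H. pose proof (pw2_pos n).
  unfold Rdiv. apply Rmult_le_compat_r; [left; apply Rinv_0_lt_compat; lra|lra]. Qed.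

Lemma gr_le1 n i : (i <= 2 ^ n)%nat -> gr n i <= 1.
Proof. intros H. apply le_INR in H. rewrite INR_pow2 in H. unfold gr. pose proof (pw2_pos n).
  apply Rmult_le_reg_r with (2 ^ n); [lra|]. unfold Rdiv. rewrite Rmult_assoc, Rinv_l; lra. Qed.

Lemma gr_inj n i j : gr n i = gr n j -> i = j.
Proof. unfold gr. intros H. pose proof (pw2_pos n). apply INR_eq.
  apply Rmult_eq_reg_r with (/ 2 ^ n); [exact H|]. apply Rinv_neq_0_compat. lra. Qed.

Lemma gr_0 n : gr n 0 = 0.
Proof. unfold gr. simpl. unfold Rdiv. ring. Qed.

Lemma gr_lift m k i : gr m i = gr (m + k) (i * 2 ^ k).
Proof. unfold gr. rewrite mult_INR, INR_pow2, pow_add. pose proof (pw2_pos m). pose proof (pw2_pos k).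
  field. split; lra. Qed.

Lemma gr_S n i : gr n (S i) = gr n i + / 2 ^ n.
Proof. unfold gr. rewrite S_INR. pose proof (pw2_pos n). field. lra. Qed.

Section Discrete.
Context {X : Type} (d : X -> X -> R) (Hm : is_metric d) (F : X -> X -> Prop) (beta : R)
  (HF : forall x, nonempty_compact d (F x)) (Hb : 0 <= beta < 1) (Hupc : set_valued_upc d F beta).

Lemma discrete_lift p lam z0 n : ctrl d p lam -> F (p 0) z0 ->
  exists Z : R -> X, Z 0 = z0 /\ (forall t, F (p t) (Z t)) /\
    forall i j, (i <= j)%nat -> (j <= 2 ^ n)%nat ->
      d (Z (gr n i)) (Z (gr n j)) <= beta * (lam (gr n j) - lam (gr n i)).
Proof.
  intros Hc Hz0.
  set (nxt := fun i z => epsilon (inhabits z0) (fun w => F (p (gr n (S i))) w /\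
                 d z w <= beta * (lam (gr n (S i)) - lam (gr n i)))).
  set (g := fix g i := match i with 0%nat => z0 | S i' => nxt i' (g i') end).
  assert (Hg : forall i, (i <= 2 ^ n)%nat -> F (p (gr n i)) (g i) /\
     (forall i', (S i' = i)%nat -> d (g i') (g i) <= beta * (lam (gr n i) - lam (gr n i')))).
  { induction i as [|i IH]; intros Hi.
    - split; [rewrite gr_0; exact Hz0|]. intros i' H; discriminate.
    - destruct (IH ltac:(lia)) as [IH1 _].
      assert (Hex : exists w, F (p (gr n (S i))) w /\
                 d (g i) w <= beta * (lam (gr n (S i)) - lam (gr n i))).
      { apply (L1 d Hm F beta HF Hb Hupc p lam); auto.
        - apply gr_pos.
        - apply gr_le. lia.
        - apply gr_le1. exact Hi. }
      pose proof (epsilon_spec (inhabits z0) _ Hex) as Hsp.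
      simpl. fold nxt. split; [exact (proj1 Hsp)|].
      intros i' Hi'. injection Hi' as ->. exact (proj2 Hsp). }
  assert (Hchain : forall i j, (i <= j)%nat -> (j <= 2 ^ n)%nat ->
      d (g i) (g j) <= beta * (lam (gr n j) - lam (gr n i))).
  { intros i j Hij Hj. induction Hij.
    - rewrite (d_refl d Hm). lra.
    - specialize (IHHij ltac:(lia)).
      destruct (Hg (S m) Hj) as [_ H2]. specialize (H2 m eq_refl).
      pose proof (d_tri d Hm (g i) (g m) (g (S m))). lra. }
  set (Z := fun t => epsilon (inhabits z0) (fun x => F (p t) x /\
            forall i, (i <= 2 ^ n)%nat -> t = gr n i -> x = g i)).
  assert (HZ : forall t, F (p t) (Z t) /\ forall i, (i <= 2 ^ n)%nat -> t = gr n i -> Z t = g i).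
  { intros t. apply (epsilon_spec (inhabits z0) (fun x => F (p t) x /\
            forall i, (i <= 2 ^ n)%nat -> t = gr n i -> x = g i)).
    destruct (classic (exists i, (i <= 2 ^ n)%nat /\ t = gr n i)) as [[i [Hi ->]]|Hno].
    - exists (g i). split; [apply Hg; exact Hi|]. intros i' _ Heq. apply gr_inj in Heq. subst. reflexivity.
    - destruct (HF (p t)) as [[x Hx] _]. exists x. split; [exact Hx|].
      intros i Hi Ht. exfalso. apply Hno. exists i. auto. }
  exists Z. split; [|split].
  - rewrite (proj2 (HZ 0) 0%nat ltac:(lia) (eq_sym (gr_0 n))). reflexivity.
  - intros t. apply HZ.
  - intros i j Hij Hj.
    rewrite (proj2 (HZ (gr n i)) i ltac:(lia) eq_refl).
    rewrite (proj2 (HZ (gr n j)) j Hj eq_refl).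
    apply Hchain; auto.
Qed.

End Discrete.

Section Diag.
Context {X : Type} (d : X -> X -> R) (Hm : is_metric d).

Lemma strict_lt (phi : nat -> nat) : (forall n, (phi n < phi (S n))%nat) ->
  forall a b, (a < b)%nat -> (phi a < phi b)%nat.
Proof. intros H a b Hab. pose proof (strict_mono phi H (S a) b Hab). specialize (H a). lia. Qed.

Lemma diagonal (s : nat -> nat -> X) (K : nat -> X -> Prop) :
  (forall k, compact_set d (K k)) -> (forall k n, K k (s k n)) ->
  exists phi : nat -> nat, (forall n, (n <= phi n)%nat) /\
    forall k, exists l, K k l /\ converges_to d (fun n => s k (phi n)) l.
Proof.
  intros HK Hs.
  assert (SC : forall k (f : nat -> nat), exists sg : nat -> nat, (forall n, (sg n < sg (S n))%nat) /\
     exists l, K k l /\ converges_to d (fun n => s k (f (sg n))) l).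
  { intros k f. apply (seq_compact d Hm (K k) (fun n => s k (f n))); auto. }
  set (sg := fun k f => proj1_sig (constructive_indefinite_description _ (SC k f))).
  assert (Hsg : forall k f, (forall n, (sg k f n < sg k f (S n))%nat) /\
     exists l, K k l /\ converges_to d (fun n => s k (f (sg k f n))) l).
  { intros k f. unfold sg. destruct (constructive_indefinite_description _ _). exact a. }
  set (Psi := fix Psi k := match k with 0%nat => fun n : nat => n | S k' => fun n => Psi k' (sg k' (Psi k') n) end).
  assert (PsiS : forall k n, Psi (S k) n = Psi k (sg k (Psi k) n)) by reflexivity.
  assert (Pstrict : forall k n, (Psi k n < Psi k (S n))%nat).
  { induction k; intros n; [simpl; lia|]. rewrite !PsiS.
    apply strict_lt; [exact IHk|]. apply Hsg. }
  assert (Rel : forall k j, exists rho : nat -> nat, (forall n, (n <= rho n)%nat) /\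
                  forall n, Psi (S k + j)%nat n = Psi (S k) (rho n)).
  { intros k j. induction j as [|j [rho [Hr1 Hr2]]].
    - exists (fun n => n). split; [lia|]. intros n. rewrite Nat.add_0_r. reflexivity.
    - exists (fun n => rho (sg (S k + j)%nat (Psi (S k + j)%nat) n)). split.
      + intros n. pose proof (strict_ge (sg (S k + j)%nat (Psi (S k + j)%nat)) (proj1 (Hsg _ _)) n).
        specialize (Hr1 (sg (S k + j)%nat (Psi (S k + j)%nat) n)). lia.
      + intros n. rewrite Nat.add_succ_r, PsiS. apply Hr2. }
  exists (fun n => Psi (S n) n). split.
  - intros n. apply strict_ge. apply Pstrict.
  - intros k. destruct (Hsg k (Psi k)) as [_ [l [Kl Hl]]]. exists l. split; [exact Kl|].
    intros e He. destruct (Hl e He) as [N HN]. exists (max N k). intros n Hn.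
    destruct (Rel k (n - k)%nat) as [rho [Hr1 Hr2]].
    replace (S n) with (S k + (n - k))%nat by lia. rewrite Hr2, PsiS.
    apply HN. specialize (Hr1 n). lia.
Qed.

End Diag.

Definition idx (m : nat) (t : R) : nat := Z.to_nat (Int_part (t * 2 ^ m)).

Lemma idx_prop m t : 0 <= t <= 1 ->
  (idx m t <= 2 ^ m)%nat /\ gr m (idx m t) <= t /\ t - gr m (idx m t) < / 2 ^ m.
Proof.
  intros Ht. pose proof (pw2_pos m) as Hp.
  set (r := t * 2 ^ m).
  assert (Hr0 : 0 <= r) by (unfold r; apply Rmult_le_pos; lra).
  assert (Hr1 : r <= 2 ^ m) by (unfold r; pose proof (Rmult_le_compat_r (2 ^ m) t 1 ltac:(lra) ltac:(lra)); lra).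
  destruct (base_Int_part r) as [H1 H2].
  assert (Hz : (0 <= Int_part r)%Z).
  { assert (-1 < IZR (Int_part r)) by lra. apply lt_IZR in H. lia. }
  assert (HI : INR (idx m t) = IZR (Int_part r)).
  { unfold idx. fold r. rewrite INR_IZR_INZ, Z2Nat.id by exact Hz. reflexivity. }
  split; [|split].
  - apply INR_le. rewrite INR_pow2, HI. lra.
  - unfold gr. rewrite HI. apply Rmult_le_reg_r with (2 ^ m); [lra|].
    unfold Rdiv. rewrite Rmult_assoc, Rinv_l by lra. unfold r in *. lra.
  - unfold gr. rewrite HI. apply Rmult_lt_reg_r with (2 ^ m); [lra|].
    unfold Rdiv. rewrite Rmult_minus_distr_r, Rmult_assoc, !Rinv_l by lra. unfold r in *. lra.
Qed.

Lemma pow2_ge m : INR m + 1 <= 2 ^ m.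
Proof. induction m; [simpl; lra|]. rewrite S_INR. simpl pow. pose proof (pos_INR m). lra. Qed.

Lemma small_pow2 e : 0 < e -> exists M, forall m, (M <= m)%nat -> / 2 ^ m < e.
Proof.
  intros He. destruct (small_lt e He) as [M HM]. exists M. intros m Hm.
  specialize (HM m Hm). pose proof (pow2_ge m). pose proof (pos_INR m).
  apply Rle_lt_trans with (/ (INR m + 1)); [|exact HM].
  apply Rinv_le_contravar; lra.
Qed.

Lemma lam_conv lam t : 0 <= t <= 1 ->
  (forall t, 0 <= t <= 1 -> forall e, 0 < e -> exists del, 0 < del /\
     forall s, 0 <= s <= 1 -> Rabs (s - t) < del -> Rabs (lam s - lam t) < e) ->
  forall e, 0 < e -> exists M, forall m, (M <= m)%nat -> Rabs (lam (gr m (idx m t)) - lam t) < e.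
Proof.
  intros Ht Hc e He. destruct (Hc t Ht e He) as [del [Hdel Hd]].
  destruct (small_pow2 del Hdel) as [M HM]. exists M. intros m Hm.
  destruct (idx_prop m t Ht) as [_ [Ha1 Ha2]]. specialize (HM m Hm).
  apply Hd.
  - split; [apply gr_pos|lra].
  - rewrite Rabs_left1; lra.
Qed.

Section Lift.
Context {X : Type} (d : X -> X -> R) (Hm : is_metric d) (F : X -> X -> Prop) (beta : R)
  (HF : forall x, nonempty_compact d (F x)) (Hb : 0 <= beta < 1) (Hupc : set_valued_upc d F beta)
  (CX : complete_metric d).

Lemma lift p lam z0 : ctrl d p lam -> F (p 0) z0 ->
  exists q, ctrl d q (fun t => beta * lam t) /\ q 0 = z0 /\ F (p 1) (q 1).
Proof.
  intros Hc Hz0.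
  pose proof (fun n => discrete_lift d Hm F beta HF Hb Hupc p lam z0 n Hc Hz0) as HD.
  set (Zs := fun n => proj1_sig (constructive_indefinite_description _ (HD n))).
  assert (HZ : forall n, Zs n 0 = z0 /\ (forall t, F (p t) (Zs n t)) /\
    forall i j, (i <= j)%nat -> (j <= 2 ^ n)%nat ->
      d (Zs n (gr n i)) (Zs n (gr n j)) <= beta * (lam (gr n j) - lam (gr n i))).
  { intros n. unfold Zs. destruct (constructive_indefinite_description _ _). exact a. }
  set (tk := fun k => gr (fst (Cantor.of_nat k)) (snd (Cantor.of_nat k))).
  destruct (diagonal d Hm (fun k n => Zs n (tk k)) (fun k => F (p (tk k))))
    as [phi [Hphi Hlim]].
  { intros k. apply HF. }
  { intros k n. apply HZ. }
  set (zlim := fun t => epsilon (inhabits z0) (fun l => converges_to d (fun n => Zs (phi n) t) l)).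
  assert (DY : forall m i, converges_to d (fun n => Zs (phi n) (gr m i)) (zlim (gr m i)) /\
                           F (p (gr m i)) (zlim (gr m i))).
  { intros m i. destruct (Hlim (Cantor.to_nat (m, i))) as [l [Kl Hl]].
    unfold tk in *. rewrite Cantor.cancel_of_to in Kl, Hl. simpl in Kl, Hl.
    assert (Hc' : converges_to d (fun n => Zs (phi n) (gr m i)) (zlim (gr m i))).
    { apply (epsilon_spec (inhabits z0) (fun l => converges_to d (fun n => Zs (phi n) (gr m i)) l)).
      exists l. exact Hl. }
    split; [exact Hc'|]. rewrite <- (conv_unique d Hm _ _ _ Hl Hc'). exact Kl. }
  assert (DB0 : forall M i j, (i <= j)%nat -> (j <= 2 ^ M)%nat ->
      d (zlim (gr M i)) (zlim (gr M j)) <= beta * (lam (gr M j) - lam (gr M i))).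
  { intros M i j Hij Hj.
    apply (conv_le d Hm (fun n => Zs (phi n) (gr M i)) (fun n => Zs (phi n) (gr M j))); try apply DY.
    intros e He. exists M. intros n Hn.
    assert (Hk : (M <= phi n)%nat) by (specialize (Hphi n); lia).
    replace (phi n) with (M + (phi n - M))%nat by lia.
    rewrite (gr_lift M (phi n - M) i), (gr_lift M (phi n - M) j).
    set (k := (phi n - M)%nat).
    assert (H := proj2 (proj2 (HZ (M + k)%nat)) (i * 2 ^ k)%nat (j * 2 ^ k)%nat).
    assert (Hle : d (Zs (M + k)%nat (gr (M + k) (i * 2 ^ k))) (Zs (M + k)%nat (gr (M + k) (j * 2 ^ k)))
      <= beta * (lam (gr (M + k) (j * 2 ^ k)) - lam (gr (M + k) (i * 2 ^ k)))).
    { apply H. - apply Nat.mul_le_mono_r. exact Hij.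
      - rewrite Nat.pow_add_r. apply Nat.mul_le_mono_r. exact Hj. }
    lra. }
  assert (DB : forall M i j, (i <= 2 ^ M)%nat -> (j <= 2 ^ M)%nat ->
      d (zlim (gr M i)) (zlim (gr M j)) <= beta * Rabs (lam (gr M j) - lam (gr M i))).
  { intros M i j Hi Hj. destruct (Nat.le_ge_cases i j) as [Hij|Hij].
    - pose proof (DB0 M i j Hij Hj). pose proof (d_pos d Hm (zlim (gr M i)) (zlim (gr M j))).
      assert (lam (gr M j) - lam (gr M i) <= Rabs (lam (gr M j) - lam (gr M i))) by apply RRle_abs.
      assert (beta * (lam (gr M j) - lam (gr M i)) <= beta * Rabs (lam (gr M j) - lam (gr M i)))
        by (apply Rmult_le_compat_l; lra). lra.
    - pose proof (DB0 M j i Hij Hi). rewrite (d_sym d Hm).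
      rewrite Rabs_minus_sym.
      assert (lam (gr M i) - lam (gr M j) <= Rabs (lam (gr M i) - lam (gr M j))) by apply RRle_abs.
      assert (beta * (lam (gr M i) - lam (gr M j)) <= beta * Rabs (lam (gr M i) - lam (gr M j)))
        by (apply Rmult_le_compat_l; lra). lra. }
  set (a := fun m t => gr m (idx m t)).
  set (q := fun t => epsilon (inhabits z0) (fun x => converges_to d (fun m => zlim (a m t)) x)).
  destruct Hc as [Hc1 Hc2].
  assert (Q1 : forall t, 0 <= t <= 1 -> converges_to d (fun m => zlim (a m t)) (q t)).
  { intros t Ht. apply (epsilon_spec (inhabits z0) (fun x => converges_to d (fun m => zlim (a m t)) x)).
    apply CX. intros e He.
    destruct (lam_conv lam t Ht Hc2 (e/2) ltac:(lra)) as [N HN].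
    exists N. intros m m' Hm1 Hm2.
    destruct (idx_prop m t Ht) as [Hi _]. destruct (idx_prop m' t Ht) as [Hi' _].
    unfold a. rewrite (gr_lift m m' (idx m t)), (gr_lift m' m (idx m' t)).
    rewrite (Nat.add_comm m' m).
    eapply Rle_lt_trans.
    { apply DB.
      - rewrite Nat.pow_add_r. apply Nat.mul_le_mono_r. exact Hi.
      - rewrite Nat.pow_add_r, (Nat.mul_comm (2 ^ m) (2 ^ m')). apply Nat.mul_le_mono_r. exact Hi'. }
    rewrite <- (gr_lift m m' (idx m t)), <- (Nat.add_comm m' m), <- (gr_lift m' m (idx m' t)).
    specialize (HN m Hm1) as HN1. specialize (HN m' Hm2) as HN2.
    pose proof (Rabs_triang (lam (gr m' (idx m' t)) - lam t) (lam t - lam (gr m (idx m t)))).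
    replace (lam (gr m' (idx m' t)) - lam t + (lam t - lam (gr m (idx m t)))) with
      (lam (gr m' (idx m' t)) - lam (gr m (idx m t))) in H by ring.
    rewrite (Rabs_minus_sym (lam t)) in H.
    set (x := Rabs (lam (gr m' (idx m' t)) - lam (gr m (idx m t)))) in *.
    assert (0 <= x) by apply Rabs_pos.
    assert (beta * x <= x) by nra. lra. }
  assert (Q2 : forall t, 0 <= t <= 1 -> F (p t) (q t)).
  { intros t Ht.
    assert (Hw : forall m, exists w, F (p t) w /\ d (zlim (a m t)) w <= beta * (lam t - lam (a m t))).
    { intros m. destruct (idx_prop m t Ht) as [Hi [Ha _]].
      apply (L1 d Hm F beta HF Hb Hupc p lam (gr m (idx m t)) t (zlim (a m t))); [split; auto| apply gr_pos | exact Ha | lra | apply DY]. }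
    set (w := fun m => proj1_sig (constructive_indefinite_description _ (Hw m))).
    assert (Hw' : forall m, F (p t) (w m) /\ d (zlim (a m t)) (w m) <= beta * (lam t - lam (a m t))).
    { intros m. unfold w. destruct (constructive_indefinite_description _ _). exact a0. }
    apply (compact_closed d Hm (F (p t)) w); [apply HF| intros m; apply Hw'|].
    intros e He.
    destruct (Q1 t Ht (e/2) ltac:(lra)) as [N1 H1].
    destruct (lam_conv lam t Ht Hc2 (e/2) ltac:(lra)) as [N2 H2].
    exists (max N1 N2). intros m Hmm.
    specialize (H1 m ltac:(lia)). specialize (H2 m ltac:(lia)).
    destruct (Hw' m) as [_ Hd].
    pose proof (d_tri d Hm (w m) (zlim (a m t)) (q t)).
    rewrite (d_sym d Hm (w m) (zlim (a m t))) in H.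
    unfold a in *. rewrite Rabs_minus_sym in H2.
    assert (lam t - lam (gr m (idx m t)) <= Rabs (lam t - lam (gr m (idx m t)))) by apply RRle_abs.
    assert (0 <= lam t - lam (gr m (idx m t))).
    { destruct (idx_prop m t Ht) as [Hi [Ha _]]. pose proof (Hc1 (gr m (idx m t)) t (gr_pos _ _) Ha (proj2 Ht)).
      pose proof (d_pos d Hm (p (gr m (idx m t))) (p t)). lra. }
    assert (beta * (lam t - lam (gr m (idx m t))) <= lam t - lam (gr m (idx m t))) by nra.
    lra. }
  exists q. split; [split|split].
  -
    intros u v Hu Huv Hv.
    replace (beta * lam v - beta * lam u) with (beta * (lam v - lam u)) by ring.
    apply (conv_le d Hm (fun m => zlim (a m u)) (fun m => zlim (a m v))); [apply Q1; lra|apply Q1; lra|].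
    intros e He.
    destruct (lam_conv lam u ltac:(lra) Hc2 (e/2) ltac:(lra)) as [N1 H1].
    destruct (lam_conv lam v ltac:(lra) Hc2 (e/2) ltac:(lra)) as [N2 H2].
    exists (max N1 N2). intros m Hmm.
    specialize (H1 m ltac:(lia)). specialize (H2 m ltac:(lia)).
    destruct (idx_prop m u ltac:(lra)) as [Hiu _]. destruct (idx_prop m v ltac:(lra)) as [Hiv _].
    unfold a. eapply Rle_trans; [apply DB; assumption|].
    set (x := Rabs (lam (gr m (idx m v)) - lam (gr m (idx m u)))).
    assert (0 <= lam v - lam u) by (pose proof (Hc1 u v Hu Huv Hv); pose proof (d_pos d Hm (p u) (p v)); lra).
    assert (x <= (lam v - lam u) + e) by (unfold x; apply Rabs_le; 
       apply Rabs_def2 in H1; apply Rabs_def2 in H2; lra).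
    assert (0 <= x) by apply Rabs_pos.
    nra.
  - intros t Ht e He. destruct (Hc2 t Ht e He) as [del [Hdel Hd]]. exists del. split; [exact Hdel|].
    intros s Hs Hst. specialize (Hd s Hs Hst).
    replace (beta * lam s - beta * lam t) with (beta * (lam s - lam t)) by ring.
    rewrite Rabs_mult, (Rabs_right beta) by lra.
    pose proof (Rabs_pos (lam s - lam t)). nra.
  - assert (Ha0 : forall m, a m 0 = 0).
    { intros m. destruct (idx_prop m 0 ltac:(lra)) as [_ [H _]]. pose proof (gr_pos m (idx m 0)).
      unfold a. lra. }
    assert (Hz : zlim 0 = z0).
    { destruct (DY 0%nat 0%nat) as [H _]. rewrite gr_0 in H.
      apply (conv_unique d Hm (fun n => Zs (phi n) 0)); [exact H|].
      intros e He. exists 0%nat. intros n _. rewrite (proj1 (HZ (phi n))), (d_refl d Hm). exact He. }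
    apply (conv_unique d Hm (fun m => zlim (a m 0))); [apply Q1; lra|].
    intros e He. exists 0%nat. intros n _. rewrite Ha0, Hz, (d_refl d Hm). exact He.
  - apply Q2. lra.
Qed.

End Lift.

Fixpoint mono (a : R) (l : list R) (b : R) : Prop :=
  match l with nil => a <= b | x :: r => a <= x /\ mono x r b end.
Fixpoint smono (a : R) (l : list R) (b : R) : Prop :=
  match l with nil => a < b | x :: r => a < x /\ smono x r b end.

Lemma mono_le a l b : mono a l b -> a <= b.
Proof. revert a; induction l as [|x r IH]; simpl; intros a H; [exact H|]. destruct H as [H1 H2].
  specialize (IH x H2). lra. Qed.

Lemma mono_app a l1 c l2 b : mono a l1 c -> mono c l2 b -> mono a (l1 ++ c :: l2) b.
Proof. revert a; induction l1 as [|x r IH]; simpl; intros a H1 H2; [tauto|]. split; [tauto|].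
  apply IH; tauto. Qed.

Lemma lub_fin (E : R -> Prop) B : (exists x, E x) -> (forall x, E x -> x <= B) ->
  Lub_Rbar E = Finite (real (Lub_Rbar E)) /\
  (forall x, E x -> x <= real (Lub_Rbar E)) /\
  (forall B', (forall x, E x -> x <= B') -> real (Lub_Rbar E) <= B').
Proof.
  intros [x0 Hx0] HB. destruct (Lub_Rbar_correct E) as [Hub Hlub].
  assert (H1 : Rbar_le x0 (Lub_Rbar E)) by (apply Hub; exact Hx0).
  assert (H2 : Rbar_le (Lub_Rbar E) B) by (apply Hlub; intros x Hx; simpl; apply HB; exact Hx).
  destruct (Lub_Rbar E) as [l| |]; simpl in *; try contradiction.
  split; [reflexivity|]. split.
  - intros x Hx. specialize (Hub x Hx). simpl in Hub. exact Hub.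
  - intros B' HB'. exact (Hlub (Finite B') (fun x Hx => HB' x Hx)).
Qed.

Section Chains.
Context {X : Type} (d : X -> X -> R) (Hm : is_metric d) (p : R -> X).

Fixpoint cs (a : R) (l : list R) (b : R) : R :=
  match l with nil => d (p a) (p b) | x :: r => d (p a) (p x) + cs x r b end.

Lemma cs_ge a l b : d (p a) (p b) <= cs a l b.
Proof. revert a; induction l as [|x r IH]; simpl; intros a; [lra|].
  pose proof (IH x). pose proof (d_tri d Hm (p a) (p x) (p b)). lra. Qed.

Lemma cs_app a l1 c l2 b : cs a (l1 ++ c :: l2) b = cs a l1 c + cs c l2 b.
Proof. revert a; induction l1 as [|x r IH]; simpl; intros a; [reflexivity|]. rewrite IH. ring. Qed.

Lemma cs_same b r : mono b r b -> cs b r b = 0.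
Proof.
  assert (G : forall a, mono a r b -> b <= a -> cs a r b = 0 /\ a = b).
  { induction r as [|x r IH]; simpl; intros a H Hba.
    - split; [|lra]. replace a with b by lra. apply (d_refl d Hm).
    - destruct H as [H1 H2]. pose proof (mono_le _ _ _ H2).
      destruct (IH x H2 ltac:(lra)) as [IH1 IH2]. subst. replace a with b by lra.
      rewrite IH1, (d_refl d Hm). split; [ring|reflexivity]. }
  intros H. apply (G b H). lra.
Qed.

Lemma split_chain a l b c : mono a l b -> a <= c <= b ->
  exists l1 l2, mono a l1 c /\ mono c l2 b /\ cs a l b <= cs a l1 c + cs c l2 b.
Proof.
  revert a; induction l as [|x r IH]; simpl; intros a H Hc.
  - exists nil, nil. simpl. split; [lra|split; [lra|]]. apply (d_tri d Hm).
  - destruct H as [H1 H2]. destruct (Rle_dec c x).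
    + exists nil, (x :: r). simpl. split; [lra|split; [tauto|]].
      pose proof (d_tri d Hm (p a) (p c) (p x)). lra.
    + destruct (IH x H2 ltac:(lra)) as [l1 [l2 [A1 [A2 A3]]]].
      exists (x :: l1), l2. simpl. split; [tauto|split; [tauto|]]. lra.
Qed.

Lemma right_chain t l2 : mono t l2 1 -> t < 1 ->
  exists f l3, t < f /\ forall s, t < s <= f -> mono s l3 1 /\ cs t l2 1 <= d (p t) (p s) + cs s l3 1.
Proof.
  induction l2 as [|x r IH]; simpl; intros H Ht.
  - exists 1, nil. split; [exact Ht|]. intros s Hs. simpl. split; [lra|]. apply (d_tri d Hm).
  - destruct H as [H1 H2]. destruct (Rle_lt_or_eq_dec t x H1) as [Hlt|Heq].
    + exists x, (x :: r). split; [exact Hlt|]. intros s Hs. simpl. split; [split; [lra|exact H2]|].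
      pose proof (d_tri d Hm (p t) (p s) (p x)). lra.
    + subst x. destruct (IH H2 Ht) as [f [l3 [Hf Hl3]]]. exists f, l3. split; [exact Hf|].
      intros s Hs. destruct (Hl3 s Hs) as [A B]. split; [exact A|]. rewrite (d_refl d Hm). lra.
Qed.

Lemma left_chain a l t : mono a l t -> a < t ->
  exists m, a <= m < t /\ forall s, m <= s <= t ->
    exists l', mono a l' s /\ cs a l t <= cs a l' s + d (p s) (p t).
Proof.
  revert a; induction l as [|x r IH]; simpl; intros a H Ha.
  - exists a. split; [lra|]. intros s Hs. exists nil. simpl. split; [lra|]. apply (d_tri d Hm).
  - destruct H as [H1 H2]. pose proof (mono_le _ _ _ H2).
    destruct (Rle_lt_or_eq_dec x t H) as [Hlt|Heq].
    + destruct (IH x H2 Hlt) as [m [Hm1 Hm2]]. exists m. split; [lra|].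
      intros s Hs. destruct (Hm2 s Hs) as [l' [A B]]. exists (x :: l'). simpl. split; [split; [lra|exact A]|]. lra.
    + subst x. exists a. split; [lra|]. intros s Hs. exists nil. simpl. split; [lra|].
      rewrite (cs_same t r H2). pose proof (d_tri d Hm (p a) (p s) (p t)). lra.
Qed.

Lemma to_smono a l b : mono a l b -> a < b -> exists l', smono a l' b /\ cs a l b <= cs a l' b.
Proof.
  revert a; induction l as [|x r IH]; simpl; intros a H Hab.
  - exists nil. simpl. split; [exact Hab|lra].
  - destruct H as [H1 H2]. pose proof (mono_le _ _ _ H2).
    destruct (Rle_lt_or_eq_dec x b H) as [Hlt|Heq].
    + destruct (IH x H2 Hlt) as [r' [A B]]. destruct (Rle_lt_or_eq_dec a x H1) as [Hax|Hax].
      * exists (x :: r'). simpl. split; [tauto|lra].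
      * subst x. exists r'. split; [exact A|]. rewrite (d_refl d Hm). lra.
    + subst x. exists nil. simpl. split; [exact Hab|]. rewrite (cs_same b r H2). lra.
Qed.

Lemma smono_sum a l b : smono a l b ->
  sum_f_R0 (fun i => d (p (nth i (a :: l ++ b :: nil) 0)) (p (nth (S i) (a :: l ++ b :: nil) 0))) (length l)
  = cs a l b.
Proof.
  revert a; induction l as [|x r IH]; intros a H; [reflexivity|].
  destruct H as [_ H]. change (length (x :: r)) with (S (length r)). rewrite decomp_sum by lia.
  cbn [pred cs]. rewrite <- (IH x H). reflexivity.
Qed.

Lemma smono_nth a l b : smono a l b -> forall i, (i < S (length l))%nat ->
  nth i (a :: l ++ b :: nil) 0 < nth (S i) (a :: l ++ b :: nil) 0.
Proof.
  revert a; induction l as [|x r IH]; simpl; intros a H i Hi.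
  - destruct i; [exact H|lia].
  - destruct H as [H1 H2]. destruct i; [exact H1|]. apply (IH x H2). lia.
Qed.

Lemma chain_bound L : path_length d p = Finite L -> forall l, mono 0 l 1 -> cs 0 l 1 <= L.
Proof.
  intros HL l Hl. destruct (to_smono 0 l 1 Hl ltac:(lra)) as [l' [A B]].
  eapply Rle_trans; [exact B|].
  set (t := fun i => nth i (0 :: l' ++ 1 :: nil) 0).
  assert (Hp : is_partition (S (length l')) t).
  { split; [lia|split; [reflexivity|split]].
    - unfold t. simpl. apply nth_middle.
    - intros i Hi. apply (smono_nth 0 l' 1 A i Hi). }
  assert (Hs : partition_sum d p (S (length l')) t = cs 0 l' 1).
  { unfold partition_sum. replace (S (length l') - 1)%nat with (length l') by lia.
    apply smono_sum. exact A. }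
  unfold path_length in HL.
  destruct (Lub_Rbar_correct (fun r => exists n t, is_partition n t /\ r = partition_sum d p n t)) as [Hub _].
  assert (Rbar_le (cs 0 l' 1) (Lub_Rbar (fun r => exists n t, is_partition n t /\ r = partition_sum d p n t))).
  { apply Hub. exists (S (length l')), t. split; [exact Hp|symmetry; exact Hs]. }
  rewrite HL in H. simpl in H. exact H.
Qed.

End Chains.

Section Init.
Context {X : Type} (d : X -> X -> R) (Hm : is_metric d) (p : R -> X).

Lemma path_length_fin : Rbar_lt (path_length d p) p_infty -> exists L, path_length d p = Finite L.
Proof.
  intros H. unfold path_length in *.
  destruct (Lub_Rbar_correct (fun r => exists n t, is_partition n t /\ r = partition_sum d p n t)) as [Hub _].
  assert (Rbar_le (partition_sum d p 1 INR) (Lub_Rbar (fun r => exists n t, is_partition n t /\ r = partition_sum d p n t))).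
  { apply Hub. exists 1%nat, INR. split; [|reflexivity].
    split; [lia|split; [reflexivity|split; [reflexivity|]]]. intros i Hi. apply lt_INR. lia. }
  destruct (Lub_Rbar _) as [L| |]; simpl in *; try contradiction. exists L. reflexivity.
Qed.

Lemma init_ctrl : continuous_path d p -> Rbar_lt (path_length d p) p_infty -> exists lam, ctrl d p lam.
Proof.
  intros Hcont Hlen. destruct (path_length_fin Hlen) as [L HL].
  set (E := fun t r => exists l, mono 0 l t /\ r = cs d p 0 l t).
  set (lam := fun t => real (Lub_Rbar (E t))).
  assert (LF : forall t, 0 <= t <= 1 ->
    (forall l, mono 0 l t -> cs d p 0 l t <= lam t) /\
    (forall B, (forall l, mono 0 l t -> cs d p 0 l t <= B) -> lam t <= B)).
  { intros t Ht. destruct (lub_fin (E t) L) as [_ [H1 H2]].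
    - exists (cs d p 0 nil t). exists nil. simpl. split; [lra|reflexivity].
    - intros x [l [Hl ->]].
      assert (mono 0 (l ++ t :: nil) 1) by (apply mono_app; simpl; auto; lra).
      pose proof (chain_bound d Hm p L HL _ H). rewrite cs_app in H0. simpl in H0.
      pose proof (d_pos d Hm (p t) (p 1)). lra.
    - split.
      + intros l Hl. apply H1. exists l. auto.
      + intros B HB. apply H2. intros x [l [Hl ->]]. apply HB. exact Hl. }
  assert (Approx : forall t, 0 <= t <= 1 -> forall e, 0 < e -> exists l, mono 0 l t /\ lam t - e < cs d p 0 l t).
  { intros t Ht e He. apply NNPP. intros Hno.
    assert (lam t <= lam t - e).
    { apply (proj2 (LF t Ht)). intros l Hl. apply Rnot_lt_le. intros Hlt. apply Hno. exists l. auto. }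
    lra. }
  assert (C1 : forall u v, 0 <= u -> u <= v -> v <= 1 -> d (p u) (p v) <= lam v - lam u).
  { intros u v Hu Huv Hv.
    assert (lam u <= lam v - d (p u) (p v)); [|lra].
    apply (proj2 (LF u ltac:(lra))). intros l Hl.
    assert (mono 0 (l ++ u :: nil) v) by (apply mono_app; simpl; auto).
    pose proof (proj1 (LF v ltac:(lra)) _ H). rewrite cs_app in H0. simpl in H0. lra. }
  exists lam. split; [exact C1|].
  intros t Ht e He.
  destruct (Hcont t Ht (e/2) ltac:(lra)) as [d1 [Hd1 Hd1']].
  assert (Left : exists dL, 0 < dL /\ forall s, 0 <= s <= 1 -> t - dL < s <= t -> lam t - lam s < e).
  { destruct (Rle_lt_or_eq_dec 0 t (proj1 Ht)) as [Ht0|Ht0].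
    - destruct (Approx t Ht (e/2) ltac:(lra)) as [l [Hl Hlc]].
      destruct (left_chain d Hm p 0 l t Hl Ht0) as [m [Hm1 Hm2]].
      exists (Rmin d1 (t - m)). split; [apply Rmin_glb_lt; lra|].
      intros s Hs Hst. pose proof (Rmin_l d1 (t - m)). pose proof (Rmin_r d1 (t - m)).
      destruct (Hm2 s ltac:(lra)) as [l' [A B]].
      pose proof (proj1 (LF s Hs) l' A).
      assert (d (p s) (p t) < e / 2) by (apply Hd1'; [exact Hs|]; rewrite Rabs_left1; lra).
      lra.
    - exists 1. split; [lra|]. intros s Hs Hst. replace s with t by lra. lra. }
  assert (Right : exists dR, 0 < dR /\ forall s, 0 <= s <= 1 -> t <= s < t + dR -> lam s - lam t < e).
  { destruct (Rle_lt_or_eq_dec t 1 (proj2 Ht)) as [Ht1|Ht1].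
    - destruct (Approx 1 ltac:(lra) (e/2) ltac:(lra)) as [l [Hl Hlc]].
      destruct (split_chain d Hm p 0 l 1 t Hl ltac:(lra)) as [l1 [l2 [A1 [A2 A3]]]].
      destruct (right_chain d Hm p t l2 A2 Ht1) as [f [l3 [Hf Hl3]]].
      exists (Rmin d1 (f - t)). split; [apply Rmin_glb_lt; lra|].
      intros s Hs Hst. pose proof (Rmin_l d1 (f - t)). pose proof (Rmin_r d1 (f - t)).
      destruct (Rle_lt_or_eq_dec t s (proj1 Hst)) as [Hts|Hts]; [|subst s; lra].
      destruct (Hl3 s ltac:(lra)) as [B1 B2].
      assert (lam s <= lam 1 - cs d p s l3 1).
      { apply (proj2 (LF s Hs)). intros k Hk.
        assert (mono 0 (k ++ s :: l3) 1) by (apply mono_app; auto).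
        pose proof (proj1 (LF 1 ltac:(lra)) _ H1). rewrite cs_app in H2. lra. }
      pose proof (proj1 (LF t Ht) l1 A1).
      assert (d (p s) (p t) < e / 2) by (apply Hd1'; [exact Hs|]; rewrite Rabs_right; lra).
      rewrite (d_sym d Hm) in H3. lra.
    - exists 1. split; [lra|]. intros s Hs Hst. replace s with t by lra. lra. }
  destruct Left as [dL [HdL HL']]. destruct Right as [dR [HdR HR']].
  exists (Rmin dL dR). split; [apply Rmin_glb_lt; lra|].
  intros s Hs Hst. pose proof (Rmin_l dL dR). pose proof (Rmin_r dL dR).
  destruct (Rle_dec s t).
  - pose proof (C1 s t ltac:(lra) r ltac:(lra)). pose proof (d_pos d Hm (p s) (p t)).
    assert (lam t - lam s < e) by (apply HL'; [exact Hs|]; rewrite Rabs_left1 in Hst; lra).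
    rewrite Rabs_left1; lra.
  - pose proof (C1 t s ltac:(lra) ltac:(lra) ltac:(lra)). pose proof (d_pos d Hm (p t) (p s)).
    assert (lam s - lam t < e) by (apply HR'; [exact Hs|]; rewrite Rabs_right in Hst; lra).
    rewrite Rabs_right; lra.
Qed.

End Init.

Theorem proposition14 (X : Type) (d : X -> X -> R) (F : X -> X -> Prop) (beta : R) :
  is_metric d ->
  inhabited X ->
  complete_metric d ->
  rectifiably_path_connected d ->
  (forall x, nonempty_compact d (F x)) ->
  0 <= beta < 1 ->
  set_valued_upc d F beta ->
  exists x, F x x.
Proof.
  intros Hm [x0] CX Hrp HF Hb Hupc.
  destruct (proj1 (HF x0)) as [x1 Hx1].
  destruct (Hrp x0 x1) as [p0 [Hp0c [Hp00 [Hp01 Hp0l]]]].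
  destruct (init_ctrl d Hm p0 Hp0c Hp0l) as [lam0 Hlam0].
  set (St := {p : R -> X & {lam : R -> R | ctrl d p lam /\ F (p 0) (p 1)}}).
  assert (step : forall s : St, {s' : St | projT1 s' 0 = projT1 s 1 /\
     forall t, proj1_sig (projT2 s') t = beta * proj1_sig (projT2 s) t}).
  { intros [p [lam [Hc Hf]]]. simpl.
    destruct (constructive_indefinite_description _ (lift d Hm F beta HF Hb Hupc CX p lam (p 1) Hc Hf))
      as [q [Hq1 [Hq2 Hq3]]].
    assert (Hq4 : F (q 0) (q 1)) by (rewrite Hq2; exact Hq3).
    exists (existT (fun p : R -> X => {lam : R -> R | ctrl d p lam /\ F (p 0) (p 1)}) q
      (exist _ (fun t => beta * lam t) (conj Hq1 Hq4))).
    simpl. split; [exact Hq2|reflexivity]. }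
  assert (Hx01 : F (p0 0) (p0 1)) by (rewrite Hp00, Hp01; exact Hx1).
  set (s0 := existT (fun p : R -> X => {lam : R -> R | ctrl d p lam /\ F (p 0) (p 1)}) p0
               (exist _ lam0 (conj Hlam0 Hx01)) : St).
  set (sq := fix sq n := match n with 0%nat => s0 | S n' => proj1_sig (step (sq n')) end).
  set (x := fun n => projT1 (sq n) 0).
  set (C := lam0 1 - lam0 0).
  assert (HC : 0 <= C).
  { pose proof (proj1 Hlam0 0 1 ltac:(lra) ltac:(lra) ltac:(lra)). pose proof (d_pos d Hm (p0 0) (p0 1)).
    unfold C. lra. }
  assert (Hlam : forall n t, proj1_sig (projT2 (sq n)) t = beta ^ n * lam0 t).
  { induction n; intros t; simpl; [ring|].
    rewrite (proj2 (proj2_sig (step (sq n)))), IHn. ring. }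
  assert (Hx : forall n, x (S n) = projT1 (sq n) 1).
  { intros n. unfold x. exact (proj1 (proj2_sig (step (sq n)))). }
  assert (HxF : forall n, F (x n) (x (S n))).
  { intros n. rewrite Hx. unfold x. destruct (sq n) as [p [lam [Hc Hf]]]. exact Hf. }
  assert (Hxd : forall n, d (x n) (x (S n)) <= beta ^ n * C).
  { intros n. rewrite Hx. unfold x. pose proof (Hlam n 0) as H0. pose proof (Hlam n 1) as H1.
    destruct (sq n) as [p [lam [Hc Hf]]]. simpl in *.
    pose proof (proj1 Hc 0 1 ltac:(lra) ltac:(lra) ltac:(lra)). unfold C. rewrite H0, H1 in H. lra. }
  assert (Hgeo : forall n k, d (x n) (x (n + k)%nat) <= C * (beta ^ n - beta ^ (n + k)) / (1 - beta)).
  { intros n k. induction k.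
    - rewrite Nat.add_0_r, (d_refl d Hm). unfold Rdiv. rewrite Rminus_diag, Rmult_0_r, Rmult_0_l. lra.
    - rewrite Nat.add_succ_r. pose proof (d_tri d Hm (x n) (x (n + k)%nat) (x (S (n + k)))).
      pose proof (Hxd (n + k)%nat).
      assert (C * (beta ^ n - beta ^ (n + k)) / (1 - beta) + beta ^ (n + k) * C =
              C * (beta ^ n - beta ^ S (n + k)) / (1 - beta)) by (simpl; field; lra).
      lra. }
  assert (Hgeo2 : forall n m, (n <= m)%nat -> d (x n) (x m) <= C * beta ^ n / (1 - beta)).
  { intros n m Hnm. replace m with (n + (m - n))%nat by lia.
    eapply Rle_trans; [apply Hgeo|]. unfold Rdiv. apply Rmult_le_compat_r.
    - left. apply Rinv_0_lt_compat. lra.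
    - pose proof (pow_le beta (n + (m - n)) (proj1 Hb)). nra. }
  assert (Hcauchy : cauchy_seq d x).
  { intros e He.
    destruct (pow_lt_1_zero beta ltac:(rewrite Rabs_right; lra) (e * (1 - beta) / (C + 1))) as [N HN].
    { apply Rdiv_lt_0_compat; [apply Rmult_lt_0_compat|]; lra. }
    exists N. intros m n Hm' Hn'.
    assert (Hk : forall a b, (N <= a)%nat -> (a <= b)%nat -> d (x a) (x b) < e).
    { intros a b Ha Hab. eapply Rle_lt_trans; [apply Hgeo2; exact Hab|].
      specialize (HN a Ha). rewrite Rabs_right in HN by (apply Rle_ge, pow_le; lra).
      apply Rmult_lt_reg_r with (1 - beta); [lra|]. unfold Rdiv. rewrite Rmult_assoc, Rinv_l by lra.
      rewrite Rmult_1_r.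
      assert (beta ^ a * (C + 1) < e * (1 - beta)).
      { apply Rmult_lt_reg_r with (/ (C + 1)); [apply Rinv_0_lt_compat; lra|].
        rewrite Rmult_assoc, Rinv_r by lra. rewrite Rmult_1_r. exact HN. }
      pose proof (pow_le beta a (proj1 Hb)). nra. }
    destruct (Nat.le_ge_cases m n); [apply Hk; lia|]. rewrite (d_sym d Hm). apply Hk; lia. }
  destruct (CX x Hcauchy) as [xs Hxs].
  exists xs.
  destruct (Hupc xs) as [N [HNo [HNx HH]]].
  destruct (HNo xs HNx) as [e0 [He0 Hball]].
  destruct (Hxs e0 He0) as [N0 HN0].
  assert (Hw : forall n, exists w, F xs w /\ ((N0 <= n)%nat -> d (x (S n)) w < beta * d xs (x n) + / (INR n + 1))).
  { intros n. destruct (Compare_dec.le_lt_dec N0 n) as [Hn|Hn].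
    - assert (HHn : Rbar_le (hausdorff d (F xs) (F (x n))) (Finite (beta * d xs (x n)))).
      { apply HH. apply Hball. rewrite (d_sym d Hm). apply HN0. exact Hn. }
      destruct (haus_right d Hm (F xs) (F (x n)) (x (S n)) _ (/ (INR n + 1)) (proj1 (HF xs)) HHn (HxF n))
        as [w [Hw1 Hw2]].
      { apply Rinv_0_lt_compat. pose proof (pos_INR n). lra. }
      exists w. split; [exact Hw1|]. intros _. exact Hw2.
    - destruct (proj1 (HF xs)) as [w Hw]. exists w. split; [exact Hw|]. intros H. lia. }
  set (w := fun n => proj1_sig (constructive_indefinite_description _ (Hw n))).
  assert (Hw' : forall n, F xs (w n) /\ ((N0 <= n)%nat -> d (x (S n)) (w n) < beta * d xs (x n) + / (INR n + 1))).
  { intros n. unfold w. destruct (constructive_indefinite_description _ _). exact a. }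
  apply (compact_closed d Hm (F xs) w); [apply HF| intros n; apply Hw'|].
  intros e He.
  destruct (Hxs (e/3) ltac:(lra)) as [N1 H1].
  destruct (small_lt (e/3) ltac:(lra)) as [N2 H2].
  exists (max N0 (max N1 N2)). intros n Hn.
  destruct (Hw' n) as [_ Hd]. specialize (Hd ltac:(lia)).
  specialize (H1 n ltac:(lia)) as H1n. specialize (H1 (S n) ltac:(lia)) as H1s. specialize (H2 n ltac:(lia)).
  pose proof (d_tri d Hm (w n) (x (S n)) xs).
  rewrite (d_sym d Hm (w n) (x (S n))) in H. rewrite (d_sym d Hm xs) in Hd.
  assert (beta * d (x n) xs <= e / 3) by (pose proof (d_pos d Hm (x n) xs); nra).
  lra.
Qed.
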